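(* Let $I\subset F$ be a two-sided ideal generated by finitely many monomials, with $d$ the maximal degree of a finite monomial basis of $I$, and $A=F/I$. Let $M=\langle e_i\bar w_{ij}\rangle\subset\bigoplus_{i=1}^rA[-\delta_i]$ be a finitely generated monomial right submodule, where $\bar w_{ij}=w_{ij}+I$ with $w_{ij}\in W\setminus I$, let $\Delta_{ij}=\delta_i+\deg w_{ij}$, $\Delta=\max\Delta_{ij}$, and $\varphi:\bigoplus_{i,j}A[-\Delta_{ij}]\to\bigoplus_iA[-\delta_i]$, $\epsilon_{ij}\mapsto e_i\bar w_{ij}$. Then the right syzygy module $K=\mathrm{Ker}\,\varphi$ is finitely generated and monomial (generated by elements $\epsilon_{ij}(u+I)$ with $u\in W$), and the maximal degree of an element of a minimal monomial basis of $K$ is at most $\Delta+d-1$.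
   Context: $\mathbb K$ is a field, $F=\mathbb K\langle x_1,\dots,x_n\rangle$ the free associative algebra with standard grading, $W$ its set of monomials. $A[-\delta]_e=A_{e-\delta}$; $\bigoplus_iA[-\delta_i]$ is the graded free right $A$-module with basis $e_i$ of degree $\delta_i$, and $\bigoplus_{i,j}A[-\Delta_{ij}]$ the graded free right $A$-module with basis $\epsilon_{ij}$ of degree $\Delta_{ij}$. *)

(* Defs.v *)
From HB Require Import structures.
From mathcomp Require Import all_boot all_order all_algebra.
Set Implicit Arguments. Unset Strict Implicit. Unset Printing Implicit Defensive.
Import Order.TTheory GRing.Theory Num.Theory.
Local Open Scope ring_scope.

(* Monomials of F = K<x_1..x_n> are words over the alphabet 'I_n; the degree
   of a monomial is its length. *)
Notation word n := (seq 'I_n).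

(* The two-sided monomial ideal I generated by the finite set G of monomials:
   a monomial lies in I iff some generator is a factor (infix) of it. *)
Definition inI (n : nat) (G : seq (word n)) (u : word n) : bool :=
  has (fun g => infix g u) G.

Definition monomial_basis (n : nat) (G : seq (word n)) : Prop :=
  uniq G /\ forall g h, g \in G -> h \in G -> g != h -> ~~ infix g h.

(* Elements of the graded free right A-module P = (+)_{k<m} A[-Delta_k]
   (A = F/I) are represented by their coefficient functions
   f k u = coefficient of eps_k (u + I), for u a normal word (u notin I). *)
Definition mfun (K : fieldType) (n m : nat) := 'I_m -> word n -> K.

Definition is_elt (K : fieldType) (n m : nat) (G : seq (word n)) (f : mfun K n m)
  : Prop :=
  (forall k u, inI G u -> f k u = 0) /\
  exists N : nat, forall k u, (N < size u)%N -> f k u = 0.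

Definition rmul (K : fieldType) (n m : nat) (G : seq (word n)) (f : mfun K n m)
  (v : word n) : mfun K n m :=
  fun k u => if suffix v u && ~~ inI G u then f k (take (size u - size v) u)
             else 0.

Definition mono (K : fieldType) (n m : nat) (G : seq (word n)) (k : 'I_m)
  (u : word n) : mfun K n m :=
  fun k' u' => if [&& k' == k, u' == u & ~~ inI G u] then 1 else 0.

Definition in_span (K : fieldType) (n m : nat) (G : seq (word n))
  (S : seq (mfun K n m)) (f : mfun K n m) : Prop :=
  exists t : seq (nat * word n * K),
    forall k u, f k u =
      \sum_(p <- t) p.2 * rmul G (nth (fun _ _ => 0) S p.1.1) p.1.2 k u.

(* phi : (+)_k A[-Delta_k] -> (+)_{i<r} A[-delta_i],  eps_k |-> e_{idx k} (w_k + I).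
   Coefficient of e_i (x + I) in phi f, x a word. *)
Definition phi (K : fieldType) (n m r : nat) (G : seq (word n))
  (idx : 'I_m -> 'I_r) (w : 'I_m -> word n) (f : mfun K n m)
  (i : 'I_r) (x : word n) : K :=
  if inI G x then 0 else
  \sum_(k < m | (idx k == i) && prefix (w k) x) f k (drop (size (w k)) x).

Definition in_ker (K : fieldType) (n m r : nat) (G : seq (word n))
  (idx : 'I_m -> 'I_r) (w : 'I_m -> word n) (f : mfun K n m) : Prop :=
  is_elt G f /\ forall i x, phi G idx w f i x = 0.

(* Main.v *)
Require Import Defs.
From HB Require Import structures.
From mathcomp Require Import all_boot all_order all_algebra.
From mathcomp Require Import zify.
Set Implicit Arguments. Unset Strict Implicit. Unset Printing Implicit Defensive.
Import Order.TTheory GRing.Theory Num.Theory.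
Local Open Scope ring_scope.

Lemma inI_infix (n : nat) (G : seq (word n)) s t :
  inI G s -> infix s t -> inI G t.
Proof. by move=> /hasP [g gG gs] st; apply/hasP; exists g => //; exact: infix_trans gs st. Qed.

Lemma prefix_common (T : eqType) (a b s : seq T) :
  prefix a s -> prefix b s -> prefix a b || prefix b a.
Proof.
rewrite prefixE => /eqP Ea; rewrite prefixE => /eqP Eb; rewrite -Ea -Eb.
case: (leqP (size a) (size b)) => h; apply/orP; [left|right].
  by rewrite -(take_takel s h); apply: prefix_take.
by rewrite -(take_takel s (ltnW h)); apply: prefix_take.
Qed.

Lemma suffix_take_eq (T : eqType) (v x u : seq T) :
  (suffix v x && (take (size x - size v) x == u)) = (x == u ++ v).
Proof.
apply/idP/eqP.
  by case/andP => /suffixP [s ->] /eqP <-; rewrite size_cat addnK take_size_cat.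
by move=> ->; rewrite suffix_suffix size_cat addnK take_size_cat //= eqxx.
Qed.

Lemma prefix_take_pred (T : eqType) (p s : seq T) :
  prefix p s -> (size p < size s)%N -> prefix p (take (size s).-1 s).
Proof.
rewrite !prefixE => /eqP E h; rewrite take_takel; first by rewrite E.
by move: h; case: (size s).
Qed.

Lemma key (n : nat) (G : seq (word n)) (w u : word n) :
  ~~ inI G w -> ~~ inI G u -> inI G (w ++ u) ->
  ~~ inI G (w ++ take (size u).-1 u) ->
  (0 < size u)%N /\ (size u < \max_(g <- G) size g)%N.
Proof.
move=> nw nu /hasP[g gG] /infixP[s1 [s2 E]] nt.
have u0 : (0 < size u)%N.
  case: u nu E nt => [|a u'] // _; rewrite cats0 => E.
  by case/negP: nw; apply/hasP; exists g => //; apply/infixP; exists s1, s2.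
split => //.
case: s2 E => [|c s2] E; last first.
  case/negP: nt; apply/hasP; exists g => //.
  have -> : w ++ take (size u).-1 u = take (size (w ++ u)).-1 (w ++ u).
    rewrite take_cat size_cat.
    have -> : ((size w + size u).-1 < size w)%N = false by lia.
    by have -> : ((size w + size u).-1 - size w)%N = (size u).-1 by lia.
  apply: (infix_trans (suffix_infix s1 g)) ; rewrite catA in E.
  apply: prefixW; apply: prefix_take_pred; first by rewrite E prefix_prefix.
  by rewrite E !size_cat /=; lia.
rewrite cats0 in E.
case: (leqP (size w) (size s1)) => h.
  case/negP: nu; apply: (@inI_infix _ _ g); first by apply/hasP; exists g => //; exact: infix_refl.
  have -> : u = drop (size w) (w ++ u) by rewrite drop_size_cat.
  rewrite E drop_cat; case: ifP => h'; first exact: suffix_infix.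
  have -> : (size w - size s1 = 0)%N by lia.
  by rewrite drop0 infix_refl.
have := @leq_bigmax_seq _ G xpredT (fun g : word n => size g) g gG (erefl true).
move=> hb; apply: (leq_trans _ hb).
have := congr1 size E; rewrite !size_cat => hs.
move: h hs; move: (size s1) (size g) (size u) (size w) => a b c e; lia.
Qed.

Fixpoint aw (n l : nat) : seq (word n) :=
  if l is l'.+1 then [::] :: [seq a :: s | a <- enum 'I_n, s <- aw n l'] else [:: [::]].

Lemma mem_aw n l (u : word n) : (u \in aw n l) = (size u <= l)%N.
Proof.
elim: l u => [|l IH] [|a u] //=.
rewrite in_cons /= ltnS. apply/allpairsP/idP => [[[x y] /= [_ hy E]]|h].
  by case: E => _ ->; rewrite -IH.
by exists (a, u); rewrite /= mem_enum IH.
Qed.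

Definition Pb n m (G : seq (word n)) (w : 'I_m -> word n) (k : 'I_m) (u : word n) : bool :=
  [&& ~~ inI G u, inI G (w k ++ u) & all (fun p => ~~ inI G (w k ++ take p u)) (iota 0 (size u))].

Definition Bs n m (G : seq (word n)) (w : 'I_m -> word n) (d : nat) : seq ('I_m * word n) :=
  undup [seq b <- [seq (k, u) | k <- enum 'I_m, u <- aw n d] | Pb G w b.1 b.2].

Lemma mem_Bs n m G w d (b : 'I_m * word n) :
  (b \in Bs G w d) = Pb G w b.1 b.2 && (size b.2 <= d)%N.
Proof.
case: b => k u /=; rewrite mem_undup mem_filter; congr (_ && _).
apply/allpairsP/idP => [[[x y] /= [_ hy E]]|h]; first by case: E => _ ->; rewrite -mem_aw.
by exists (k, u); rewrite /= mem_enum mem_aw.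
Qed.

Lemma Pb_size n m G (w : 'I_m -> word n) k u :
  ~~ inI G (w k) -> Pb G w k u -> (0 < size u)%N /\ (size u < \max_(g <- G) size g)%N.
Proof.
move=> hw /and3P[nu iu /allP al].
case: (posnP (size u)) => [u0|u0].
  by move/size0nil: u0 iu => ->; rewrite cats0 (negbTE hw).
have hm : (size u).-1 \in iota 0 (size u) by rewrite mem_iota /=; lia.
by have [_ ->] := key hw nu iu (al _ hm).
Qed.

Definition good (K : fieldType) n m (G : seq (word n)) (w : 'I_m -> word n) (h : mfun K n m) : Prop :=
  [/\ (forall k u, inI G u -> h k u = 0),
      (exists N : nat, forall k u, (N < size u)%N -> h k u = 0) &
      (forall k y, ~~ inI G y -> prefix (w k) y -> h k (drop (size (w k)) y) = 0)].

Lemma good_ker (K : fieldType) n m r G (idx : 'I_m -> 'I_r) w (h : mfun K n m) :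
  good G w h -> in_ker G idx w h.
Proof.
case=> h1 h2 h3; split; first by split.
move=> i x; rewrite /phi; case: ifP => // nx.
by apply: big1 => k /andP[_ pk]; apply: h3 => //; rewrite nx.
Qed.

Lemma good_ext (K : fieldType) n m G w (g h : mfun K n m) :
  (forall k u, g k u = h k u) -> good G w g -> good G w h.
Proof.
move=> e [g1 [N g2] g3]; split.
- by move=> k u iu; rewrite -e g1.
- by exists N => k u hu; rewrite -e g2.
- by move=> k y ny py; rewrite -e g3.
Qed.

Lemma good0 (K : fieldType) n m G w : good G w (fun (_ : 'I_m) (_ : word n) => 0 : K).
Proof. by split => //; exists 0%N. Qed.

Lemma good_add (K : fieldType) n m G w (c : K) (g h : mfun K n m) :
  good G w g -> good G w h -> good G w (fun k u => c * g k u + h k u).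
Proof.
move=> [g1 [N1 g2] g3] [h1 [N2 h2] h3]; split.
- by move=> k u iu; rewrite g1 ?h1 // mulr0 addr0.
- exists (maxn N1 N2) => k u hs; rewrite g2 ?h2 ?mulr0 ?addr0 //; lia.
- by move=> k y ny py; rewrite g3 ?h3 // mulr0 addr0.
Qed.

Lemma good_span (K : fieldType) n m G w (S : seq (mfun K n m)) :
  (forall j v, good G w (rmul G (nth (fun _ _ => 0) S j) v)) ->
  forall t : seq (nat * word n * K),
    good G w (fun k u => \sum_(p <- t) p.2 * rmul G (nth (fun _ _ => 0) S p.1.1) p.1.2 k u).
Proof.
move=> H; elim => [|p t IH].
  by apply: good_ext (@good0 _ _ _ _ _) => k u; rewrite big_nil.
by apply: good_ext (good_add p.2 (H p.1.1 p.1.2) IH) => k u; rewrite big_cons.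
Qed.

Lemma rmul_mono (K : fieldType) n m G (k0 : 'I_m) (u0 v : word n) k x :
  rmul G (mono K G k0 u0) v k x =
  if [&& k == k0, x == u0 ++ v, ~~ inI G x & ~~ inI G u0] then 1 else 0.
Proof.
rewrite /rmul /mono -suffix_take_eq.
case: (suffix v x); case: (inI G x); case: (k == k0);
  case: (take (size x - size v) x == u0); case: (inI G u0) => //.
Qed.

Lemma good_rmul_mono (K : fieldType) n m G (w : 'I_m -> word n) k0 u0 v :
  Pb G w k0 u0 -> good G w (rmul G (mono K G k0 u0) v).
Proof.
move=> /and3P[_ iu _]; split.
- by move=> k x ix; rewrite rmul_mono ix /= !andbF.
- exists (size u0 + size v)%N => k x hs; rewrite rmul_mono; case: ifP => // /and4P[_ /eqP hx _ _].
  by move: hs; rewrite hx size_cat ltnn.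
- move=> k y ny pky; rewrite rmul_mono; case: ifP => // /and4P[/eqP hk /eqP hx _ _].
  case/prefixP: pky hx ny => y' -> ; rewrite drop_size_cat // => -> ny.
  case/negP: ny; rewrite hk catA; apply: inI_infix iu _; exact: prefix_infix.
Qed.

Lemma good_nth (K : fieldType) n m G (w : 'I_m -> word n) (B : seq ('I_m * word n)) j v :
  (forall b, b \in B -> Pb G w b.1 b.2) ->
  good G w (rmul G (nth (fun _ _ => 0) [seq mono K G b.1 b.2 | b <- B] j) v).
Proof.
move=> hB; case: (ltnP j (size B)) => hj.
  case: B hB hj => [|b0 B'] // hB hj.
  rewrite (nth_map b0) //; apply: good_rmul_mono; apply: hB; exact: mem_nth.
rewrite nth_default ?size_map //; apply: good_ext (@good0 _ _ _ _ _) => k u.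
by rewrite /rmul; case: ifP.
Qed.

Lemma ker_supp (K : fieldType) n m r G (idx : 'I_m -> 'I_r) (w : 'I_m -> word n) (f : mfun K n m) k u :
  (forall k l, k != l -> idx k = idx l -> ~~ prefix (w k) (w l)) ->
  in_ker G idx w f -> f k u != 0 -> ~~ inI G u /\ inI G (w k ++ u).
Proof.
move=> hinj [[f1 _] f2] fk; split.
  by apply/negP => iu; rewrite f1 ?eqxx in fk.
case: (boolP (inI G (w k ++ u))) => // ni.
have := f2 (idx k) (w k ++ u); rewrite /phi (negbTE ni) (bigD1 k) /=; last first.
  by rewrite eqxx prefix_prefix.
rewrite drop_size_cat // big1 ?addr0; first by move=> e; rewrite e eqxx in fk.
move=> l /andP[/andP[/eqP hl pl] nlk]; exfalso.
case/orP: (prefix_common pl (prefix_prefix (w k) u)) => hp.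
  by move: (hinj l k nlk hl); rewrite hp.
have nkl : k != l by rewrite eq_sym.
by move: (hinj k l nkl (esym hl)); rewrite hp.
Qed.

Lemma exists_B n m (G : seq (word n)) (w : 'I_m -> word n) k u :
  ~~ inI G u -> inI G (w k ++ u) -> exists2 p, (p <= size u)%N & Pb G w k (take p u).
Proof.
move=> nu iu.
set a := fun p => inI G (w k ++ take p u).
set p := find a (iota 0 (size u).+1).
have ha : has a (iota 0 (size u).+1).
  by apply/hasP; exists (size u); [rewrite mem_iota /= ltnSn | rewrite /a take_size].
have hp : (p < (size u).+1)%N by rewrite -[X in (_ < X)%N](size_iota 0) -has_find.
exists p => //.
have hpu : (p <= size u)%N by [].
have := nth_find 0 ha; rewrite -/p nth_iota // add0n => ip.
apply/and3P; split => //.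
  apply/negP => it; case/negP: nu; apply: inI_infix it _; exact: infix_take.
apply/allP => q; rewrite mem_iota size_takel // add0n => /andP[_ hq].
rewrite take_takel ?(ltnW hq) //.
have := before_find 0 hq; rewrite nth_iota ?add0n; first by rewrite /a => ->.
lia.
Qed.

Lemma decomp (K : fieldType) n m r G (idx : 'I_m -> 'I_r) (w : 'I_m -> word n)
  (B : seq ('I_m * word n)) (f : mfun K n m) k u :
  (forall k l, k != l -> idx k = idx l -> ~~ prefix (w k) (w l)) ->
  (forall b, b \in B -> Pb G w b.1 b.2) ->
  (forall k u, Pb G w k u -> (k, u) \in B) ->
  in_ker G idx w f -> f k u != 0 ->
  forall k' x,
  rmul G (nth (fun _ _ => 0) [seq mono K G b.1 b.2 | b <- B]
            (find (fun b : 'I_m * word n => (b.1 == k) && prefix b.2 u) B))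
         (drop (size (nth [::] [seq b.2 | b <- B]
            (find (fun b : 'I_m * word n => (b.1 == k) && prefix b.2 u) B))) u) k' x
  = mono K G k u k' x.
Proof.
move=> hinj hB hB' hf fk k' x.
set j := find _ B.
have [nu iu] := ker_supp hinj hf fk.
have [p hp Pp] := exists_B nu iu.
have ha : has (fun b : 'I_m * word n => (b.1 == k) && prefix b.2 u) B.
  by apply/hasP; exists (k, take p u); [exact: hB' | rewrite /= eqxx prefix_take].
have hj : (j < size B)%N by rewrite -has_find.
have := nth_find (k, [::]) ha; rewrite -/j.
rewrite (nth_map (k, [::])) // (nth_map (k, [::])) //.
have hc := hB _ (mem_nth (k, [::]) hj).
case: (nth (k, [::]) B j) hc => c1 c2 /= /and3P[nc2 _ _] /andP[/eqP-> pc].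
rewrite rmul_mono /mono nc2 andbT.
have -> : c2 ++ drop (size c2) u = u.
  by move: pc; rewrite prefixE => /eqP {1}<-; rewrite cat_take_drop.
by case: (eqVneq x u) => [->|] //=; rewrite !andbF.
Qed.

Theorem mainTheorem15 (K : fieldType) (n : nat) (G : seq (word n))
  (r : nat) (delta : 'I_r -> int) (m : nat) (idx : 'I_m -> 'I_r)
  (w : 'I_m -> word n) :
  monomial_basis G ->
  (forall k, ~~ inI G (w k)) ->
  (* the e_{idx k} (w_k + I) form the (minimal) monomial basis of M *)
  (forall k l, k != l -> idx k = idx l -> ~~ prefix (w k) (w l)) ->
  let d : nat := \max_(g <- G) size g in
  let Delta (k : 'I_m) : int := delta (idx k) + (size (w k))%:Z in
  exists B : seq ('I_m * word n),
    [/\ uniq B,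
        (forall b, b \in B -> ~~ inI G b.2 /\ in_ker G idx w (mono K G b.1 b.2)),
        (forall f : mfun K n m,
            in_ker G idx w f <-> in_span G [seq mono K G b.1 b.2 | b <- B] f),
        (forall b, b \in B ->
            ~ in_span G [seq mono K G c.1 c.2 | c <- B & c != b] (mono K G b.1 b.2))
      & (forall b, b \in B ->
            exists k : 'I_m, Delta b.1 + (size b.2)%:Z <= Delta k + d%:Z - 1)].
Proof.
move=> hG hw hinj d Delta.
have hBP : forall b, b \in Bs G w d -> Pb G w b.1 b.2 by move=> b; rewrite mem_Bs => /andP[].
have hB' : forall k u, Pb G w k u -> (k, u) \in Bs G w d.
  move=> k u P; rewrite mem_Bs /= P /=; have [_ h] := Pb_size (hw k) P; exact: ltnW.
exists (Bs G w d); split.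
- exact: undup_uniq.
- move=> b hb; have P := hBP b hb; split; first by case/and3P: P.
  apply: good_ker; apply: good_ext (@good_rmul_mono K _ _ _ _ _ _ [::] P) => k x.
  by rewrite rmul_mono /mono cats0; case: (eqVneq x b.2) => [->|] /=; rewrite ?andbb ?andbF.
- move=> f; split.
  + move=> hf; have [[f1 [N f2]] f3] := hf.
    pose pairs := undup [seq (k, u) | k <- enum 'I_m, u <- aw n N].
    pose J (q : 'I_m * word n) :=
      find (fun b : 'I_m * word n => (b.1 == q.1) && prefix b.2 q.2) (Bs G w d).
    exists [seq (J q, drop (size (nth [::] [seq b.2 | b <- Bs G w d] (J q))) q.2, f q.1 q.2)
           | q <- pairs].
    move=> k u; rewrite big_map /=.
    rewrite (eq_bigr (fun q => f q.1 q.2 * mono K G q.1 q.2 k u)); last first.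
      move=> [k' u'] _ /=; case: (eqVneq (f k' u') 0) => [->|fk]; first by rewrite !mul0r.
      by rewrite (decomp hinj hBP hB' hf fk).
    case: (eqVneq (f k u) 0) => fk.
      rewrite fk big1 // => -[k' u'] _ /=; rewrite /mono.
      by case: ifP => [/and3P[/eqP<- /eqP<- _]|_]; rewrite ?fk ?mul0r ?mulr0.
    have hin : (k, u) \in pairs.
      rewrite mem_undup; apply: allpairs_f; first by rewrite mem_enum.
      rewrite mem_aw leqNgt; apply/negP => h; by rewrite f2 ?eqxx in fk.
    have [nu _] := ker_supp hinj hf fk.
    rewrite (bigD1_seq (k, u)) ?undup_uniq //= big1 ?addr0.
      by rewrite /mono !eqxx nu mulr1.
    move=> [k' u'] nq /=; rewrite /mono.
    case: ifP => [/and3P[/eqP hk /eqP hu _]|_]; last by rewrite mulr0.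
    by rewrite hk hu eqxx in nq.
  + move=> [t ht]; apply: good_ker.
    apply: good_ext (good_span (fun j v => @good_nth K _ _ _ _ _ j v hBP) t) => k u.
    by rewrite ht.
- move=> b hb [t ht]; have P := hBP b hb.
  have nb : ~~ inI G b.2 by case/and3P: P.
  have := ht b.1 b.2.
  have -> : mono K G b.1 b.2 b.1 b.2 = 1 by rewrite /mono !eqxx nb.
  rewrite big1; first by move/eqP; rewrite oner_eq0.
  move=> p _.
  set S' := [seq c <- Bs G w d | c != b].
  case: (ltnP p.1.1 (size S')) => hj; last first.
    by rewrite nth_default ?size_map // /rmul; case: ifP; rewrite mulr0.
  rewrite (nth_map b) //.
  have := mem_nth b hj; rewrite mem_filter.
  set c := nth b S' p.1.1 => /andP[cb cB].
  rewrite rmul_mono; case: ifP => [/and4P[/eqP h1 /eqP h2 _ _]|_]; last by rewrite mulr0.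
  have [_ ic _] := and3P (hBP c cB).
  have [_ _ /allP al] := and3P P.
  move: h2; case: p.1.2 => [|a v] h2.
    rewrite cats0 in h2; case/negP: cb; apply/eqP.
    by rewrite [c]surjective_pairing [b]surjective_pairing h1 h2.
  have hm : size c.2 \in iota 0 (size b.2) by rewrite mem_iota h2 size_cat /=; lia.
  by move: (al _ hm); rewrite h2 take_size_cat // h1 ic.
- move=> b hb; exists b.1; have [_ hs] := Pb_size (hw b.1) (hBP b hb).
  have hs' : (size b.2 < d)%N := hs.
  rewrite /Delta; move: hs'; move: (size b.2) => a; clearbody d; lia.
Qed.
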